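(* Let $K$ be a field, $T$ a subgroup of $K^\times$, and suppose the factor hyperfield $F=K_T$ admits a Krasner valuation $w$. Then there exist a valuation $v$ on $K$ with $vK=wF$ and an initial segment $\rho$ of $vK$ containing $0$ such that $T=1+\mathcal{M}_v^\rho:=\{x\in K: v(x-1)\notin\rho\}$ (so $F=K_\rho:=K_{1+\mathcal{M}_v^\rho}$) and $w=v_\rho$, where $v_\rho(xT):=vx$.
   Context: A hyperfield is $(F,+,\cdot,0,1)$ with $+$ a multivalued operation making $(F,+,0)$ a canonical hypergroup (associative, commutative, unique inverses $-x$ with $0\in x+(-x)$, and $z\in x+y\Rightarrow y\in z+(-x)$; write $x-y:=x+(-y)$ and $A+B:=\bigcup_{a\in A,b\in B}a+b$), $(F,\cdot)$ commutative with $0$ absorbing, $x(y+z)=xy+xz$, and $F\setminus\{0\}$ an abelian group with neutral $1\neq0$. Valuation on a hyperfield $F$: for an ordered abelian group $\Gamma$ and $\infty>\Gamma$ with $\gamma+\infty=\infty+\gamma=\infty$, a surjective map $v:F\to\Gamma\cup\{\infty\}$ with $vx=\infty\iff x=0$, $v(xy)=vx+vy$, $z\in x+y\Rightarrow vz\ge\min\{vx,vy\}$; $vF:=v(F\setminus\{0\})$. Fields are hyperfields with singleton sums. Factor hyperfield: for a field $K$ and a subgroup $T\le K^\times$, $K_T$ is the set of cosets $xT$ with $xT+yT:=\{(x+yt)T:t\in T\}$, $xT\cdot yT=xyT$. An initial segment of an ordered set $\Gamma$ is $\rho\subseteq\Gamma$ with $\delta\in\rho,\gamma<\delta\Rightarrow\gamma\in\rho$.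 For $\gamma\in\Gamma$, $\rho+\gamma:=\{\delta+\gamma:\delta\in\rho\}$, and for $\alpha\in\Gamma\cup\{\infty\}$, ''$\alpha>\rho+\gamma$'' means $\alpha\notin\rho+\gamma$. Krasner valuation: a valuation $v$ on a hyperfield $F$ such that (KVH1) for all $x,y\in F$ with $0\notin x+y$, the set $v(x+y)$ is a singleton; (KVH2) there is an initial segment $\rho_v$ of $vF$ with $0\in\rho_v$ (the norm) such that for all $x,y,z,t\in F$ with $z\in x+y$: $t\in x+y$ iff $vs>\rho_v+\min\{vx,vy\}$ for all $s\in z-t$. *)

(* Defs.v *)
From HB Require Import structures.
From mathcomp Require Import all_boot all_order all_algebra.
From Stdlib Require Import ClassicalEpsilon.
Set Implicit Arguments. Unset Strict Implicit. Unset Printing Implicit Defensive.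
Import Order.TTheory GRing.Theory Num.Theory.
Local Open Scope ring_scope.

Definition ordered_abelian_group (G : porderZmodType) : Prop :=
  (forall a b : G, a <= b \/ b <= a) /\
  (forall a b c : G, a <= b -> a + c <= b + c).

(* Γ ∪ {∞}: [Some g] is g ∈ Γ, [None] is ∞. *)
Definition eleq (G : porderZmodType) (a b : option G) : Prop :=
  match a, b with
  | _, None => True
  | None, Some _ => False
  | Some a', Some b' => a' <= b'
  end.

Definition eadd (G : porderZmodType) (a b : option G) : option G :=
  match a, b with
  | Some a', Some b' => Some (a' + b')
  | _, _ => None
  end.

Definition emin (G : porderZmodType) (a b : option G) : option G :=
  match a, b with
  | None, _ => b
  | _, None => a
  | Some a', Some b' => if a' <= b' then a else b
  end.

(* initial segment rho of Γ (here vF = Γ, since valuations are surjective) *)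
Definition initial_segment (G : porderZmodType) (rho : G -> Prop) : Prop :=
  forall d g : G, rho d -> g < d -> rho g.

(* "alpha > rho + gamma"  :=  alpha ∉ rho + gamma = {d + gamma : d ∈ rho} *)
Definition above_shift (G : porderZmodType) (rho : G -> Prop) (gamma : G)
  (alpha : option G) : Prop :=
  match alpha with
  | None => True
  | Some a => ~ (exists d, rho d /\ a = d + gamma)
  end.

(* [hadd x y z] means z ∈ x + y. *)
Record hyperstruct := HyperStruct {
  hcarrier :> Type;
  hzero : hcarrier;
  hone : hcarrier;
  hadd : hcarrier -> hcarrier -> hcarrier -> Prop;
  hneg : hcarrier -> hcarrier;
  hmul : hcarrier -> hcarrier -> hcarrier
}.

Definition field_hs (K : fieldType) : hyperstruct :=
  @HyperStruct K 0 1 (fun x y z => z = x + y) (fun x => - x) (fun x y => x * y).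

Definition is_valuation (F : hyperstruct) (G : porderZmodType)
  (v : F -> option G) : Prop :=
  (forall a : option G, exists x : F, v x = a) /\
  (forall x : F, v x = None <-> x = hzero F) /\
  (forall x y : F, v (hmul x y) = eadd (v x) (v y)) /\
  (forall x y z : F, hadd x y z -> eleq (emin (v x) (v y)) (v z)).

(* Krasner valuation.  In (KVH2), "rho + min{vx,vy}" is only defined for
   min{vx,vy} ∈ Γ, so the condition is imposed when min{vx,vy} is finite. *)
Definition is_krasner_valuation (F : hyperstruct) (G : porderZmodType)
  (v : F -> option G) : Prop :=
  is_valuation v /\
  (forall x y : F, ~ hadd x y (hzero F) ->
     exists a : option G,
       (forall z, hadd x y z -> v z = a) /\ (exists z, hadd x y z)) /\
  (exists rho : G -> Prop,
     initial_segment rho /\ rho 0 /\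
     forall (x y z t : F) (gamma : G),
       emin (v x) (v y) = Some gamma -> hadd x y z ->
       (hadd x y t <->
        forall s : F, hadd z (hneg t) s -> above_shift rho gamma (v s))).

Section Factor.
Variables (K : fieldType) (T : K -> Prop).

Definition is_subgroup_units : Prop :=
  T 1 /\ (forall x, T x -> x != 0) /\
  (forall x y, T x -> T y -> T (x * y)) /\ (forall x, T x -> T x^-1).

Definition coset_of (x : K) : K -> Prop := fun y => exists t, T t /\ y = x * t.

Definition coset := {S : K -> Prop | exists x, S = coset_of x}.

Definition mkcoset (x : K) : coset := exist _ (coset_of x) (ex_intro _ x erefl).

Definition crep (X : coset) : K :=
  proj1_sig (constructive_indefinite_description _ (proj2_sig X)).

Definition cadd (X Y Z : coset) : Prop :=
  exists x y t, X = mkcoset x /\ Y = mkcoset y /\ T t /\ Z = mkcoset (x + y * t).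

Definition factor_hyperfield : hyperstruct :=
  @HyperStruct coset (mkcoset 0) (mkcoset 1) cadd
    (fun X => mkcoset (- crep X)) (fun X Y => mkcoset (crep X * crep Y)).
End Factor.

(* Main.v *)
From Stdlib Require Import ClassicalEpsilon ProofIrrelevance FunctionalExtensionality PropExtensionality.
Require Import Defs.
From HB Require Import structures.
From mathcomp Require Import all_boot all_order all_algebra.
From mathcomp Require Import ring.
Import Order.TTheory GRing.Theory Num.Theory.
Local Open Scope ring_scope.

Lemma sig_eq_hp (A : Type) (P : A -> Prop) (a b : A) (pa : P a) (pb : P b) :
  a = b -> exist P a pa = exist P b pb.
Proof. move=> E; subst b; f_equal; apply: proof_irrelevance. Qed.

Section Cos.
Variables (K : fieldType) (T : K -> Prop).
Hypothesis HT : is_subgroup_units T.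

Lemma T1 : T 1. Proof. by case: HT. Qed.
Lemma Tnz x : T x -> x != 0. Proof. by case: HT => _ [H _]; apply: H. Qed.
Lemma TM x y : T x -> T y -> T (x * y). Proof. by case: HT => _ [_ [H _]]; apply: H. Qed.
Lemma TV x : T x -> T x^-1. Proof. by case: HT => _ [_ [_ H]]; apply: H. Qed.

Lemma mkE x y : mkcoset T x = mkcoset T y <-> exists t, T t /\ y = x * t.
Proof.
split.
- move=> /(congr1 (@proj1_sig _ _)) /= E.
  have : coset_of T y y by exists 1; split; [exact: T1|rewrite mulr1].
  by rewrite -E.
- case=> t [Tt ->]; apply: sig_eq_hp.
  apply: functional_extensionality => z; apply: propositional_extensionality.
  split.
  + case=> s [Ts ->]; exists (t^-1 * s); split; first by apply: TM => //; apply: TV.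
    by rewrite mulrA -(mulrA x) mulfV ?Tnz // mulr1.
  + case=> s [Ts ->]; exists (t * s); split; first by apply: TM.
    by rewrite mulrA.
Qed.

Lemma crepK (X : coset T) : mkcoset T (crep X) = X.
Proof.
case: X => S p; rewrite /crep /=.
case: constructive_indefinite_description => x /= Hx.
by apply: sig_eq_hp; rewrite Hx.
Qed.

Lemma crep_mk x : exists t, T t /\ crep (mkcoset T x) = x * t.
Proof. by apply/mkE; rewrite crepK. Qed.

Lemma mkT x t : T t -> mkcoset T (t * x) = mkcoset T x.
Proof.
move=> Tt; apply/mkE; exists t^-1; split; first by apply: TV.
by rewrite mulrAC mulfV ?Tnz // mul1r.
Qed.

Lemma hmulE x y :
  @hmul (factor_hyperfield T) (mkcoset T x) (mkcoset T y) = mkcoset T (x * y).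
Proof.
rewrite /=; have [a [Ta ->]] := crep_mk x; have [b [Tb ->]] := crep_mk y.
symmetry; apply/mkE; exists (a * b); split; first by apply: TM.
by rewrite mulrACA.
Qed.

Lemma hnegE x : @hneg (factor_hyperfield T) (mkcoset T x) = mkcoset T (- x).
Proof.
rewrite /=; have [a [Ta ->]] := crep_mk x.
by apply/mkE; exists a^-1; split; [apply: TV|rewrite mulNr mulfK ?Tnz].
Qed.

Lemma mk0 x : mkcoset T x = mkcoset T 0 <-> x = 0.
Proof.
split; last by move->.
move/mkE => [t [Tt E]]; move: E => /esym/eqP.
by rewrite mulf_eq0 (negbTE (Tnz _ Tt)) orbF => /eqP.
Qed.

Lemma caddI x y u : T u ->
  @hadd (factor_hyperfield T) (mkcoset T x) (mkcoset T y) (mkcoset T (x + y * u)).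
Proof. by move=> Tu; exists x, y, u. Qed.

End Cos.
Arguments T1 {K T}.
Arguments Tnz {K T}.
Arguments TM {K T}.
Arguments TV {K T}.
Arguments mkE {K T}.
Arguments crepK {K T}.
Arguments crep_mk {K T}.
Arguments mkT {K T}.
Arguments hmulE {K T}.
Arguments hnegE {K T}.
Arguments mk0 {K T}.
Arguments caddI {K T}.

Lemma notrho_up (G : porderZmodType) (rho : G -> Prop) (a b c : option G) :
  initial_segment rho ->
  (match a with None => True | Some a' => ~ rho a' end) ->
  (match b with None => True | Some b' => ~ rho b' end) ->
  eleq (emin a b) c ->
  (match c with None => True | Some c' => ~ rho c' end).
Proof.
move=> Hi; case: c => // c.
have key : forall m, ~ rho m -> m <= c -> ~ rho c.
  move=> m Hm; rewrite le_eqVlt => /orP [/eqP <-|lt] // Hc; apply: Hm.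
  exact: Hi Hc lt.
case: a => [a|]; case: b => [b|] //=.
- by case: ifP => _ Ha Hb /=; [apply: key Ha|apply: key Hb].
- by move=> Ha _; apply: key.
- by move=> _ Hb; apply: key.
Qed.

Theorem mainTheorem8 (K : fieldType) (T : K -> Prop) (G : porderZmodType)
  (w : factor_hyperfield T -> option G) :
  is_subgroup_units T ->
  ordered_abelian_group G ->
  is_krasner_valuation w ->
  exists (v : field_hs K -> option G) (rho : G -> Prop),
    is_valuation v /\
    (forall g : G, (exists x : K, x != 0 /\ v x = Some g) <->
                   (exists X : factor_hyperfield T, X <> mkcoset T 0 /\ w X = Some g)) /\
    initial_segment rho /\ rho 0 /\
    (forall x : K, T x <-> match v (x - 1) with
                           | None => True
                           | Some a => ~ rho a
                           end) /\
    (forall x : K, w (mkcoset T x) = v x).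
Proof.
move=> HT [Htot Htr] [[Hsurj [Hzero [Hmul Hultra]]] [_ [rho [Hinit [Hrho0 Hkr]]]]].
pose v := fun x : K => w (mkcoset T x).
exists v, rho.
have wnz : forall x, x != 0 -> exists g, w (mkcoset T x) = Some g.
  move=> x nx; case E: (w (mkcoset T x)) => [g|]; first by exists g.
  by move/Hzero: E => /(mk0 HT) /eqP; rewrite (negbTE nx).
have w1 : w (mkcoset T 1) = Some 0.
  have [g Hg] := wnz 1 (oner_neq0 _).
  have := Hmul (mkcoset T 1) (mkcoset T 1); rewrite hmulE // mulr1 Hg /= => [[E]].
  by congr Some; apply: (addrI g); rewrite addr0.
have wN1 : w (mkcoset T (-1)) = Some 0.
  have [h Hh] := wnz (-1) ltac:(by rewrite oppr_eq0 oner_eq0).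
  have := Hmul (mkcoset T (-1)) (mkcoset T (-1)).
  rewrite hmulE // mulrNN mulr1 w1 Hh /= => [[E]].
  congr Some.
  case: (Htot h 0) => le.
  - have := Htr _ _ h le; rewrite add0r -E => ge; exact: le_anti (introT andP (conj le ge)).
  - have := Htr _ _ h le; rewrite add0r -E => ge; exact: le_anti (introT andP (conj ge le)).
have wneg : forall z, w (mkcoset T (- z)) = w (mkcoset T z).
  move=> z; rewrite -mulN1r -hmulE // Hmul wN1.
  by case: (w (mkcoset T z)) => //= c; rewrite add0r.
have wT : forall t z, T t -> w (mkcoset T (t * z)) = w (mkcoset T z).
  by move=> t z Tt; rewrite mkT.
have ultra : forall p q, eleq (emin (w (mkcoset T p)) (w (mkcoset T q))) (w (mkcoset T (p + q))).
  move=> p q; apply: Hultra; have := caddI p q 1 (T1 HT); by rewrite mulr1.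
have H0 : w (mkcoset T 0) = None by apply/Hzero.
have HZ : @hadd (factor_hyperfield T) (mkcoset T 1) (mkcoset T 0) (mkcoset T 1).
  by have := caddI 1 0 1 (T1 HT); rewrite mul0r addr0.
have Hk t := Hkr (mkcoset T 1) (mkcoset T 0) (mkcoset T 1) t 0
  ltac:(by rewrite w1 H0) HZ.
have Tcos : forall x, T x <-> @hadd (factor_hyperfield T) (mkcoset T 1) (mkcoset T 0) (mkcoset T x).
  move=> x; split.
  - move=> Tx; suff -> : mkcoset T x = mkcoset T 1 by [].
    by apply/(mkE HT); exists x^-1; split; [apply: (TV HT)|rewrite mulfV ?(Tnz HT) //].
  - case=> x' [y' [t [E1 [E2 [Tt E3]]]]].
    move: E3; move/esym/(mk0 HT): E2 => ->; rewrite mul0r addr0.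
    move: E1 => /(mkE HT) [a [Ta ->]] /esym /(mkE HT) [b [Tb ->]].
    by rewrite mul1r; apply: (TM HT).
have notr : forall (o : option G), above_shift rho 0 o <->
    match o with None => True | Some a => ~ rho a end.
  case=> //= a; split.
  - by move=> H Ha; apply: H; exists a; rewrite addr0.
  - by move=> H [d [Hd E]]; apply: H; rewrite E addr0.
have fwd : forall x, T x -> match w (mkcoset T (1 - x)) with None => True | Some a => ~ rho a end.
  move=> x /Tcos /(Hk (mkcoset T x)).1 Hs; apply/notr; apply: Hs.
  rewrite hnegE //; have := caddI 1 (- x) 1 (T1 HT); by rewrite mulr1.
split; [|split; [|split; [done|split; [done|split]]]].
- split; [|split; [|split]].
  + move=> a; have [X HX] := Hsurj a; exists (crep X); by rewrite /v crepK.
  + move=> x; rewrite /v /=; split; first by move/Hzero/(mk0 HT).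
    by move=> ->; apply/Hzero.
  + by move=> x y; rewrite /v /= -hmulE // Hmul.
  + by move=> x y z /= ->; apply: ultra.
- move=> g; split.
  + case=> x [nx Hx]; exists (mkcoset T x); split => //.
    by move/(mk0 HT)/eqP; rewrite (negbTE nx).
  + case=> X [nX HX]; exists (crep X); split; last by rewrite /v crepK.
    by apply/eqP => E; apply: nX; rewrite -(crepK X) E.
- move=> x; rewrite /v; split.
  + by move/fwd; rewrite -wneg opprB.
  + move=> Hx; apply/Tcos; apply/(Hk (mkcoset T x)) => s.
    rewrite hnegE // => [[x' [y' [t [E1 [E2 [Tt ->]]]]]]].
    move: E1 => /(mkE HT) [a [Ta ->]]; move: E2 => /(mkE HT) [b [Tb ->]].
    rewrite mul1r; apply/notr.
    set u := b * t.
    have Tu : T u by apply: (TM HT).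
    have -> : a + - x * b * t = a * (1 - u / a) + u * (1 - x).
      rewrite /u mulrBr mulr1 mulrBr mulr1 mulrCA mulfV ?(Tnz HT) // mulr1.
      by rewrite !mulNr mulrC mulrA; ring.
    apply: (@notrho_up _ _ _ _ _ Hinit _ _ (ultra _ _)).
    * rewrite wT //; apply: fwd; apply: (TM HT) => //; exact: (TV HT).
    * by rewrite wT // -wneg opprB.
- by [].
Qed.
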